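(* Let $m\in\mathbb{Z}$ be odd and let $(d,v)\in\mathbb{Z}^2$ with $d>0$. There is no decomposition $(d,v)=(d_1,v_1)+(d_2,v_2)$ in $\mathbb{Z}^2$ with $d_1,d_2>0$ satisfying $$\frac{w_1}{d_1}=\frac{w_2}{d_2},\qquad w_1:=v_1-\frac m2d_1d_2,\quad w_2:=v_2+\frac m2d_1d_2,$$ if and only if either $\gcd(d,v)=1$ and $d\not\equiv2\pmod4$, or $\gcd(d,v)=2$ and $d\equiv2\pmod4$. *)

(* Defs.v *)
From mathcomp Require Import all_boot all_order all_algebra.
Set Implicit Arguments. Unset Strict Implicit. Unset Printing Implicit Defensive.
Import Order.TTheory GRing.Theory Num.Theory.
Local Open Scope ring_scope.

Definition good_decomp (m d v d1 v1 d2 v2 : int) : Prop :=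
  [/\ 0 < d1, 0 < d2, d = d1 + d2, v = v1 + v2 &
      (v1%:~R - (m%:~R / 2) * d1%:~R * d2%:~R) / (d1%:~R : rat)
      = (v2%:~R + (m%:~R / 2) * d1%:~R * d2%:~R) / (d2%:~R : rat)].

(* Main.v *)
Require Import Defs.
From mathcomp Require Import all_boot all_order all_algebra.
From mathcomp Require Import zify ring lra.
Import Order.TTheory GRing.Theory Num.Theory.
Local Open Scope ring_scope.

Lemma tri (x : int) : exists t : int, x * (x - 1) = t * 2.
Proof.
have [q [r [-> hr]]] : exists q r : int, x = q * 2 + r /\ (r = 0 \/ r = 1) by
  exists (x %/ 2)%Z, (x %% 2)%Z; lia.
case: hr => ->.
- exists (q * (q * 2 + 0 - 1)); ring.
- exists ((q * 2 + 1) * q); ring.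
Qed.

Lemma rat_eq (m d1 v1 d2 v2 : int) : 0 < d1 -> 0 < d2 ->
  ((v1%:~R - (m%:~R / 2) * d1%:~R * d2%:~R) / (d1%:~R : rat)
      = (v2%:~R + (m%:~R / 2) * d1%:~R * d2%:~R) / (d2%:~R : rat)) <->
  2 * (v1 * d2 - v2 * d1) = m * d1 * d2 * (d1 + d2).
Proof.
move=> h1 h2.
have n1 : (d1%:~R : rat) != 0 by rewrite intr_eq0 gt_eqF.
have n2 : (d2%:~R : rat) != 0 by rewrite intr_eq0 gt_eqF.
have key : (v1%:~R - (m%:~R / 2) * d1%:~R * d2%:~R) * (d2%:~R : rat)
   - (v2%:~R + (m%:~R / 2) * d1%:~R * d2%:~R) * (d1%:~R : rat)
   = ((2 * (v1 * d2 - v2 * d1) - m * d1 * d2 * (d1 + d2))%:~R) / 2.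
  by field.
split.
- move/eqP; rewrite eqr_div // -subr_eq0 key mulf_eq0 invr_eq0 /= orbF.
  by rewrite intr_eq0 subr_eq0 => /eqP.
- move=> E; apply/eqP; rewrite eqr_div // -subr_eq0 key E subrr mul0r.
  by [].
Qed.

Lemma decompA (m d v t : int) : d * (d - 1) = t * 2 ->
  (exists d1 v1 d2 v2 : int, good_decomp m d v d1 v1 d2 v2) <->
  (exists d1 : int, [/\ 0 < d1, d1 < d & (d %| d1 * (v + m * t))%Z]).
Proof.
move=> ht; split.
- move=> [d1 [v1 [d2 [v2 [h1 h2 hd hv]]]]].
  move/(rat_eq m d1 v1 d2 v2 h1 h2) => E.
  have [t1 ht1] := tri d1.
  exists d1; split; [done | lia |].
  apply/dvdzP; exists (v1 + m * t1).
  have a1 := congr1 (fun x => m * d1 * x) ht.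
  have a2 := congr1 (fun x => m * d * x) ht1.
  simpl in a1, a2.
  subst d v. lia.
- move=> [d1 [h1 h2 /dvdzP [k hk]]].
  have [t1 ht1] := tri d1.
  exists d1, (k - m * t1), (d - d1), (v - (k - m * t1)).
  split; [done | lia | ring | ring |].
  apply/rat_eq; [done | lia |].
  have a1 := congr1 (fun x => m * d1 * x) ht.
  have a2 := congr1 (fun x => m * d * x) ht1.
  simpl in a1, a2.
  lia.
Qed.

Lemma decompC (d w : int) : 0 < d ->
  (exists d1 : int, [/\ 0 < d1, d1 < d & (d %| d1 * w)%Z]) <-> gcdz d w <> 1.
Proof.
move=> hd; split.
- move=> [d1 [h1 h2 hdv]] hg.
  have cp : coprimez d w by rewrite /coprimez hg.
  move: hdv; rewrite Gauss_dvdzl // => /dvdzP [q hq].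
  have : q <= 0 \/ 1 <= q by lia.
  case=> hq'; nia.
- move=> hg.
  set g := gcdz d w.
  have gpos : 0 < g.
    have g0 : 0 <= g by rewrite /g /gcdz.
    rewrite lt_def g0 andbT /g gcdz_eq0; apply/negP => /andP [/eqP d0 _]; lia.
  have /dvdzP [d1 hd1] := dvdz_gcdl d w.
  have /dvdzP [k hk] := dvdz_gcdr d w.
  rewrite -/g in hd1 hk.
  have g2 : 2 <= g by move: hg gpos; rewrite -/g; lia.
  exists d1; split.
  + nia.
  + nia.
  + apply/dvdzP; exists k. rewrite hk hd1; ring.
Qed.

Lemma cop2 (x : int) : coprimez 2 x = ((x %% 2)%Z == 1).
Proof.
rewrite /coprimez -gcdz_modr.
have : ((x %% 2)%Z = 0 \/ (x %% 2)%Z = 1) by lia.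
by case=> ->.
Qed.

Lemma gcd1E (x y : int) : gcdz x y = 1 <-> coprimez x y.
Proof. by rewrite /coprimez; split => /eqP. Qed.

Lemma partB (m d v t : int) : odd `|m|%N -> 0 < d -> d * (d - 1) = t * 2 ->
  gcdz d (v + m * t) = 1 <->
  ((gcdz d v = 1 /\ (d %% 4)%Z != 2) \/ (gcdz d v = 2 /\ (d %% 4)%Z = 2)).
Proof.
move=> hm hd ht.
have hm2 : (m %% 2)%Z = 1 by lia.
have [q [hq|hq]] : exists q, d = q * 2 + 1 \/ d = q * 2 by exists (d %/ 2)%Z; lia.
- subst d.
  have tE : t = (q * 2 + 1) * q by lia.
  rewrite tE.
  have -> : v + m * ((q * 2 + 1) * q) = (m * q) * (q * 2 + 1) + v by ring.
  rewrite gcdzMDl; split.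
  + by move=> h; left; split => //; lia.
  + by case=> [[]//|[_ h]]; lia.
- subst d.
  have [a ha] : exists a, m = a * 2 + 1 by exists (m %/ 2)%Z; lia.
  have tE : t = q * (q * 2 - 1) by lia.
  have -> : v + m * t = (a * (q * 2 - 1) + q - 1) * (q * 2) + (v + q).
    rewrite tE ha; ring.
  rewrite gcdzMDl gcd1E coprimezMl cop2.
  have -> : coprimez q (v + q) = coprimez q v by rewrite /coprimez gcdzDr.
  have [f [hf|hf]] : exists f, q = f * 2 \/ q = f * 2 + 1 by exists (q %/ 2)%Z; lia.
  + have -> : ((v + q) %% 2 == 1)%Z = ((v %% 2)%Z == 1).
      by apply/idP/idP => /eqP h; apply/eqP; lia.
    rewrite gcd1E coprimezMl cop2.
    split.
    * by move=> h; left; split => //; lia.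
    * by case=> [[]//|[_ h]]; lia.
  + have [u [hu|hu]] : exists u, v = u * 2 \/ v = u * 2 + 1 by exists (v %/ 2)%Z; lia.
    * subst v.
      have -> : ((u * 2 + q) %% 2 == 1)%Z = true by apply/eqP; lia.
      rewrite andbT -(mulz_gcdl q u 2) coprimezMr (coprimez_sym q 2) cop2.
      have -> : ((q %% 2)%Z == 1) = true by apply/eqP; lia.
      rewrite andbT -gcd1E.
      split.
      - by move=> h; right; split; lia.
      - by case=> [[_ h]|[h _]]; lia.
    * have -> : ((v + q) %% 2 == 1)%Z = false by apply/negbTE/eqP; lia.
      rewrite andbF; split => //.
      case=> [[_ h]|[h _]]; first lia.
      have := dvdz_gcdr (q * 2) v; rewrite h => /dvdz_mod0P; lia.
Qed.

Theorem lemma8p7 (m d v : int) (hm : odd `|m|%N) (hd : 0 < d) :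
  ~ (exists d1 v1 d2 v2 : int, good_decomp m d v d1 v1 d2 v2) <->
  ((gcdz d v = 1 /\ (d %% 4)%Z != 2) \/ (gcdz d v = 2 /\ (d %% 4)%Z = 2)).
Proof.
have [t ht] := tri d.
rewrite -(@partB m d v t hm hd ht) (@decompA m d v t ht) (@decompC d (v + m * t) hd).
split; last by move=> h hn.
by move=> h; case: (eqVneq (gcdz d (v + m * t)) 1) => // /eqP.
Qed.
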